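(* For any $\phi\in\mathcal{C}$, $$\delta(\phi)(\omega)=\int_0^1\int_{\mathbb{U}}\phi(u,t,\omega)\,\tilde\mu_\omega(du,dt).$$
   Context: Let $\mathbb{U}$ be a Lusin space and $\nu$ a $\sigma$-finite measure on $(\mathbb{U},\mathcal{B}(\mathbb{U}))$ with $\nu(\mathbb{U})=\infty$. $\Omega$ is the set of integer-valued measures $\omega$ on $\mathbb{U}\times[0,1]$ with $\omega(\{(u,t)\})\le1$ and $\omega(A\times[0,1])<\infty$ whenever $\nu(A)<\infty$; $\mu_\omega:=\omega$; $\mathcal{F}_t:=\sigma\{\mu_\omega(A\times(0,s]):s\le t,A\in\mathcal{B}(\mathbb{U})\}$; $\mathbb{P}$ makes $\mu$ a Poisson random measure with intensity $\pi(du,dt)=\nu(du)dt$; $\tilde\mu_\omega:=\mu_\omega-\pi$. For $(u,t)\in\mathbb{U}\times[0,1]$, $\varepsilon^-_{(u,t)}$ removes a mass: $(\varepsilon^-_{(u,t)}\omega)(A):=\omega(A\cap\{(u,t)\}^c)$. For $\phi\in L^1(\pi\times\mathbb{P})$ the divergence is $\delta(\phi)(\omega):=\int_0^1\int_{\mathbb{U}}\phi(u,t,\varepsilon^-_{(u,t)}\omega)\,\tilde\mu_\omega(du,dt)$. $\mathcal{C}$ is the linear span of processes $\phi(u,t,\omega)=1_{(t_0,t_1]}(t)g(u,\omega)$, where $0\le t_0<t_1\le1$, $g$ is bounded and $\mathcal{B}(\mathbb{U})\times\mathcal{F}_{t_0}$-measurable, and $g(u,\omega)1_{U^c}(u)=0$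 for some $U\in\mathcal{B}(\mathbb{U})$ with $\nu(U)<\infty$. *)

(* Defs.v *)
From HB Require Import structures.
From mathcomp Require Import all_boot all_order all_algebra.
From mathcomp Require Import all_classical all_reals all_analysis.
From mathcomp Require Import measurable_realfun lebesgue_measure.
Set Implicit Arguments. Unset Strict Implicit. Unset Printing Implicit Defensive.
Import Order.TTheory GRing.Theory Num.Theory.
Local Open Scope classical_set_scope.
Local Open Scope ring_scope.

Definition Borel (T : ptopologicalType) := g_sigma_algebraType (@open T).

(* Polish space: separable, completely metrizable (here: a Hausdorff complete
   pseudometric space with a countable dense subset). *)
Definition lusin_space (R : realType) (T : ptopologicalType) : Prop :=
  hausdorff_space T /\
  exists (P : completePseudoMetricType R) (f : P -> T),
    [/\ hausdorff_space P, (exists D : set P, countable D /\ dense D),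
        continuous f & bijective f].

Section poisson_setting.
Context {R : realType} {T : ptopologicalType}.
Local Notation U := (Borel T).
Local Notation I01 := (`[(0:R), (1:R)]%classic : set R).

(* candidate elements omega : set functions on U x R (time component in [0,1]) *)
Definition pfun_om := set (U * R)%type -> \bar R.

Definition is_measure (w : pfun_om) : Prop :=
  [/\ w set0 = 0%E, (forall A, measurable A -> (0 <= w A)%E) & semi_sigma_additive w].

Definition Omega (nu : set U -> \bar R) : set pfun_om := [set w |
  [/\ is_measure w,
      w (setT `*` ~` I01) = 0%E,
      (forall A, measurable A -> w A = +oo%E \/ exists n : nat, w A = (n%:R)%:E),
      (forall p, (w [set p] <= 1)%E) &
      (forall A : set U, measurable A -> (nu A < +oo)%E ->
         (w (A `*` I01) < +oo)%E)]].

Definition Fgen (nu : set U -> \bar R) (t : R) : set (set pfun_om) :=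
  [set E | exists (A : set U) (s : R) (B : set (\bar R)),
     [/\ measurable A, s <= t, measurable B &
         E = [set w | Omega nu w /\ B (w (A `*` (`]0, s]%classic : set R)))]]].

Definition filt (nu : set U -> \bar R) (t : R) : set (set pfun_om) :=
  smallest (sigma_algebra (Omega nu)) (Fgen nu t).

Definition prod_filt (nu : set U -> \bar R) (t : R) : set (set (U * pfun_om)) :=
  smallest (sigma_algebra (setT `*` Omega nu))
    [set E | exists (A : set U) (B : set pfun_om),
       [/\ measurable A, filt nu t B & E = A `*` B]].

Definition elem (t0 t1 : R) (g : U -> pfun_om -> R) : U -> R -> pfun_om -> R :=
  fun u t w => \1_(`]t0, t1]%classic) t * g u w.

Definition elem_ok (nu : set U -> \bar R) (t0 t1 : R) (g : U -> pfun_om -> R) : Prop :=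
  [/\ (0 <= t0 /\ t0 < t1 /\ t1 <= 1),
      (exists M : R, forall u w, Omega nu w -> `|g u w| <= M),
      (forall B : set R, measurable B ->
         prod_filt nu t0 [set z | (setT `*` Omega nu) z /\ B (g z.1 z.2)]) &
      (exists V : set U, [/\ measurable V, (nu V < +oo)%E &
         forall u w, Omega nu w -> ~ V u -> g u w = 0])].

Definition in_C (nu : set U -> \bar R) (phi : U -> R -> pfun_om -> R) : Prop :=
  exists (n : nat) (c a b : 'I_n -> R) (g : 'I_n -> U -> pfun_om -> R),
    (forall i, elem_ok nu (a i) (b i) (g i)) /\
    (forall u t w, I01 t -> Omega nu w ->
       phi u t w = \sum_(i < n) c i * elem (a i) (b i) (g i) u t w).

Definition pi_int (nu : set U -> \bar R) : set (U * R)%type -> \bar R :=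
  (nu \x (@lebesgue_measure R))%E.

(* integral over U x [0,1] against the compensated measure mu_omega - pi *)
Definition comp_int (nu : set U -> \bar R) (w : pfun_om) (f : U * R -> R) : \bar R :=
  (\int[w]_(z in setT `*` I01) (f z)%:E
   - \int[pi_int nu]_(z in setT `*` I01) (f z)%:E)%E.

Definition eps_minus (p : U * R) (w : pfun_om) : pfun_om := fun A => w (A `&` ~` [set p]).

Definition divergence (nu : set U -> \bar R) (phi : U -> R -> pfun_om -> R) (w : pfun_om) : \bar R :=
  comp_int nu w (fun z => phi z.1 z.2 (eps_minus z w)).

End poisson_setting.

(* Main.v *)
Require Import Defs.
From HB Require Import structures.
From mathcomp Require Import all_boot all_order all_algebra.
From mathcomp Require Import all_classical all_reals all_analysis.
From mathcomp Require Import measurable_realfun lebesgue_measure.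
Local Open Scope classical_set_scope.
Local Open Scope ring_scope.
Import Order.TTheory GRing.Theory Num.Theory.

Section helpers.
Context {R : realType} {T : ptopologicalType}.
Local Notation U := (Borel T).

Lemma set1_meas (hT : hausdorff_space T) (z : (U * R)%type) : measurable [set z].
Proof.
case: z => u t; have ->: [set (u, t)] = [set u] `*` [set t] by apply/seteqP; split => -[a b] /= ; [case=> -> -> | case=> /= -> ->].
 apply: measurableX; last exact: measurable_set1.
rewrite -[X in measurable X]setCK; apply: measurableC; apply: sub_gen_smallest.
rewrite openC; exact/accessible_closed_set1/hausdorff_accessible.
Qed.

Lemma wmono (w : @pfun_om R T) : is_measure w -> forall A B, measurable A ->
  measurable B -> A `<=` B -> (w A <= w B)%E.
Proof.
move=> [w0 w_ge0 wsa] A B mA mB AB.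
have add2 := semi_additiveW w0 (semi_sigma_additive_is_additive w0 wsa).
rewrite -(setDUK AB) add2 //; last 3 first.
- exact: measurableD.
- by rewrite setDUK.
- by rewrite setDIK.
by rewrite leeDl // w_ge0 //; exact: measurableD.
Qed.
End helpers.

Lemma integral_ext d (T0 : measurableType d) (R : realType)
  (mu : set T0 -> \bar R) (D : set T0) (f g : T0 -> \bar R) :
  (forall x, D x -> f x = g x) -> integral mu D f = integral mu D g.
Proof.
move=> fg; rewrite /integral.
have -> : f \_ D = g \_ D.
  by apply/funext => x; rewrite /patch; case: ifP => // /set_mem/fg ->.
by [].
Qed.

Section main.
Context {R : realType} {T : ptopologicalType}.
Local Notation U := (Borel T).

Lemma eps_Omega (hT : hausdorff_space T) (nu : set U -> \bar R) (w : @pfun_om R T)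
  (z : (U * R)%type) : Omega nu w -> Omega nu (eps_minus z w).
Proof.
move=> [[w0 wge0 wsa] wout wint wat wfin].
have mz : measurable (~` [set z]) by apply: measurableC; exact: set1_meas.
have wm : is_measure w by [].
rewrite /eps_minus; split.
- split; first by rewrite set0I.
  + by move=> A mA; apply: wge0; exact: measurableI.
  + move=> F mF tF mU; rewrite setI_bigcupl; apply: wsa.
    * by move=> i; exact: measurableI.
    * move=> i j _ _ [x [[Fi _] [Fj _]]]; apply: tF => //; by exists x.
    * by rewrite -setI_bigcupl; exact: measurableI.
- apply/le_anti/andP; split; last first.
    by apply: wge0; apply: measurableI => //; apply: measurableX => //;
      apply: measurableC; exact: measurable_itv.
  rewrite -wout; apply: wmono => //.
  + by apply: measurableI => //; apply: measurableX => //;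
      apply: measurableC; exact: measurable_itv.
  + by apply: measurableX => //; apply: measurableC; exact: measurable_itv.
- by move=> A mA; apply: wint; exact: measurableI.
- move=> p; have [->|pz] := eqVneq p z.
    by rewrite setICr w0.
  rewrite (_ : [set p] `&` ~` [set z] = [set p]) ?wat //.
  by apply/setIidl => x -> /= xz; move: pz; rewrite xz eqxx.
- move=> A mA nuA; apply: le_lt_trans (wfin A mA nuA).
  apply: wmono => //.
  + by apply: measurableI => //; apply: measurableX => //; exact: measurable_itv.
  + by apply: measurableX => //; exact: measurable_itv.
Qed.

Lemma filt_inv (nu : set U -> \bar R) (t : R) (w w' : @pfun_om R T) :
  Omega nu w -> Omega nu w' ->
  (forall A s, measurable A -> s <= t ->
     w' (A `*` (`]0, s]%classic : set R)) = w (A `*` (`]0, s]%classic : set R))) ->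
  forall E, filt nu t E -> (E w <-> E w').
Proof.
move=> Ow Ow' H E; apply: (smallest_sub (X := [set E | E w <-> E w'])).
- split => /=.
  + by [].
  + move=> A /= HA; split=> -[_ nA]; split => //; by [rewrite -HA | rewrite HA].
  + move=> F HF; split=> -[k _ Fk]; exists k => //; by apply/HF.
- move=> _ [A [s [B [mA st mB ->]]]] /=; rewrite H //; split=> -[_ Bw]; by split.
Qed.

Lemma prod_inv (nu : set U -> \bar R) (t : R) (w w' : @pfun_om R T) :
  Omega nu w -> Omega nu w' ->
  (forall A s, measurable A -> s <= t ->
     w' (A `*` (`]0, s]%classic : set R)) = w (A `*` (`]0, s]%classic : set R))) ->
  forall E, prod_filt nu t E -> forall u, (E (u, w) <-> E (u, w')).
Proof.
move=> Ow Ow' H E; apply: (smallest_sub (X := [set E | forall u, E (u, w) <-> E (u, w')])).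
- split => /=.
  + by [].
  + move=> A /= HA u; split=> -[_ nA]; split => //; by [rewrite -HA | rewrite HA].
  + move=> F HF u; split=> -[k _ Fk]; exists k => //; by apply/HF.
- move=> _ [A [B [mA fB ->]]] /= u; have := @filt_inv nu t w w' Ow Ow' H B fB.
  by move=> HB; split=> -[Au Bw]; split => //; apply/HB.
Qed.

Lemma g_inv (nu : set U -> \bar R) t0 t1 g (w w' : @pfun_om R T) :
  elem_ok nu t0 t1 g -> Omega nu w -> Omega nu w' ->
  (forall A s, measurable A -> s <= t0 ->
     w' (A `*` (`]0, s]%classic : set R)) = w (A `*` (`]0, s]%classic : set R))) ->
  forall u, g u w' = g u w.
Proof.
move=> [_ _ gm _] Ow Ow' H u.
have := @prod_inv nu t0 w w' Ow Ow' H _ (gm _ (measurable_set1 (g u w))) u.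
by move=> [+ _] => /(_ (conj (conj I Ow) erefl)) [_].
Qed.

End main.

Theorem lemma3p1 (R : realType) (T : ptopologicalType)
  (hT : lusin_space R T)
  (nu : {measure set (Borel T) -> \bar R})
  (nu_sf : sigma_finite setT nu) (nu_inf : nu setT = +oo%E)
  (phi : Borel T -> R -> @pfun_om R T -> R) (hphi : in_C nu phi)
  (w : @pfun_om R T) (hw : Omega nu w) :
  divergence nu phi w = comp_int nu w (fun z => phi z.1 z.2 w).
Proof.
have hH : hausdorff_space T by case: hT.
have key : forall z : (Borel T * R)%type, (`[(0:R), (1:R)]%classic : set R) z.2 ->
    phi z.1 z.2 (eps_minus z w) = phi z.1 z.2 w.
  move=> [u t] /= zt.
  have Oe := @eps_Omega R T hH nu w (u, t) hw.
  case: hphi => n [c [a [b [g [gok Heq]]]]].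
  rewrite !Heq //; apply: eq_bigr => i _; rewrite /elem.
  have [tin|tnin] := boolP (t \in (`]a i, b i]%classic : set R)); last first.
    by rewrite /indic (negbTE tnin) !mul0r !mulr0.
  move: tin; rewrite inE /= => tin.
  congr (_ * (_ * _)); apply: (@g_inv R T nu (a i) (b i)) => //.
  move=> A s mA sa; rewrite /eps_minus; congr w; apply/setIidl.
  move=> [x y] [_ /= ys] /= [_ yt]; move: ys tin; rewrite yt !in_itv /= => /andP[_ ts] /andP[at_ _].
  by move: (le_lt_trans ts (le_lt_trans sa at_)); rewrite ltxx.
rewrite /divergence /comp_int; congr (_ - _)%E; apply: integral_ext => z [_ zI]; by rewrite key.
Qed.
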